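(* Let $\gamma\sim\mathcal{FB}(\bar\gamma;\kappa,\mu,m,\eta,\varrho)$ be a Fluctuating Beckmann random variable (as defined in the context). Then for every real $s\le 0$ its moment generating function $M_\gamma(s)=\mathbb{E}[e^{s\gamma}]$ is $$ M_\gamma(s)=\frac{1}{\left(1-\frac{2\eta\,\bar\gamma s}{\mu(1+\eta)(1+\kappa)}\right)^{\mu/2}\left(1-\frac{2\,\bar\gamma s}{\mu(1+\eta)(1+\kappa)}\right)^{\mu/2}} \left[1-\frac{1}{m}\left(\frac{\mu\kappa\frac{\varrho^2}{1+\varrho^2}(1+\eta)\bar\gamma s}{(1+\eta)(1+\kappa)\mu-2\eta\bar\gamma s}+\frac{\mu\kappa\frac{1}{1+\varrho^2}(1+\eta)\bar\gamma s}{(1+\eta)(1+\kappa)\mu-2\bar\gamma s}\right)\right]^{-m}. $$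
   Context: Fluctuating Beckmann (FB) model. Let $\mu$ be a positive integer, $\sigma_x,\sigma_y>0$, $m>0$, $\bar\gamma>0$, and let $p_1,\dots,p_\mu,q_1,\dots,q_\mu$ be real numbers with $p^2:=\sum_{i=1}^\mu p_i^2$, $q^2:=\sum_{i=1}^\mu q_i^2$, and $q^2>0$. Let $X_1,\dots,X_\mu,Y_1,\dots,Y_\mu,\xi$ be mutually independent random variables with $X_i\sim\mathcal N(0,\sigma_x^2)$, $Y_i\sim\mathcal N(0,\sigma_y^2)$, and $\xi\ge 0$ Nakagami-$m$ distributed with $\mathbb E[\xi^2]=1$, i.e. $\xi^2$ is Gamma distributed with shape $m$ and scale $1/m$ (density of $\xi$: $f_\xi(x)=\frac{2m^m}{\Gamma(m)}x^{2m-1}e^{-mx^2}$, $x>0$). Set $W=\sum_{i=1}^\mu\big[(X_i+p_i\xi)^2+(Y_i+q_i\xi)^2\big]$ and $\gamma=\bar\gamma\,W/\mathbb E[W]$ (so $\mathbb E[\gamma]=\bar\gamma$). The parameters are $\kappa=\frac{p^2+q^2}{\mu(\sigma_x^2+\sigma_y^2)}$, $\varrho^2=p^2/q^2$ (with $\varrho\ge0$), $\eta=\sigma_x^2/\sigma_y^2$. We then write $\gamma\sim\mathcal{FB}(\bar\gamma;\kappa,\mu,m,\eta,\varrho)$. *)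

(* Defs.v *)
From Stdlib Require Import Reals Lra.
Open Scope R_scope.

Fixpoint sumR (n : nat) (f : nat -> R) : R :=
  match n with
  | O => 0
  | S k => sumR k f + f k
  end.

Definition ImpInt_R (f : R -> R) (l : R) : Prop :=
  forall eps, 0 < eps -> exists A, 0 < A /\
    forall a b, A <= a -> A <= b ->
      exists pr : Riemann_integrable f (- a) b, Rabs (RiemannInt pr - l) < eps.

Definition ImpInt_pos (f : R -> R) (l : R) : Prop :=
  forall eps, 0 < eps -> exists d A, 0 < d /\ 0 < A /\
    forall a b, 0 < a -> a <= d -> A <= b ->
      exists pr : Riemann_integrable f a b, Rabs (RiemannInt pr - l) < eps.

Definition is_Gamma (m g : R) : Prop :=
  ImpInt_pos (fun t => Rpower t (m - 1) * exp (- t)) g.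

Definition vcons (x : R) (v : nat -> R) : nat -> R :=
  fun i => match i with O => x | S j => v j end.

(* Iterated improper integral over R^n of  (prod_i w i (v i)) * F v :
   int w0(x0) [ int w1(x1) [ ... F(x0,x1,...) ... ] dx1 ] dx0 = l. *)
Fixpoint IterInt (n : nat) (w : nat -> R -> R) (F : (nat -> R) -> R) (l : R)
  : Prop :=
  match n with
  | O => F (fun _ => 0) = l
  | S k => exists g : R -> R,
      (forall x, IterInt k (fun i => w (S i)) (fun v => F (vcons x v)) (g x))
      /\ ImpInt_R (fun x => w O x * g x) l
  end.

Definition gauss_pdf (sigma x : R) : R :=
  exp (- (x ^ 2) / (2 * sigma ^ 2)) / (sqrt (2 * PI) * sigma).

(* Nakagami-m density with E[xi^2] = 1; Gm = Gamma(m) *)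
Definition nakagami_pdf (m Gm x : R) : R :=
  2 * Rpower m m / Gm * Rpower x (2 * m - 1) * exp (- m * x ^ 2).

(* Coordinates of the Gaussian vector v : X_i = v i, Y_i = v (mu + i), i < mu. *)
Definition FB_weights (mu : nat) (sx sy : R) : nat -> R -> R :=
  fun i => if Nat.ltb i mu then gauss_pdf sx else gauss_pdf sy.

Definition FB_W (mu : nat) (p q : nat -> R) (xi : R) (v : nat -> R) : R :=
  sumR mu (fun i => (v i + p i * xi) ^ 2 + (v (mu + i)%nat + q i * xi) ^ 2).

(* E[h(xi, X, Y)] = l, with xi ~ Nakagami-m (Gm = Gamma(m)) independent of
   X_i ~ N(0,sx^2), Y_i ~ N(0,sy^2) (all independent). Written as the
   iterated integral against the product density. *)
Definition FB_Expect (mu : nat) (sx sy m Gm : R)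
  (h : R -> (nat -> R) -> R) (l : R) : Prop :=
  exists g : R -> R,
    (forall x, 0 < x -> IterInt (2 * mu) (FB_weights mu sx sy) (h x) (g x))
    /\ ImpInt_pos (fun x => nakagami_pdf m Gm x * g x) l.

Definition FB_p2 (mu : nat) (p : nat -> R) : R := sumR mu (fun i => p i ^ 2).
Definition FB_kappa (mu : nat) (sx sy : R) (p q : nat -> R) : R :=
  (FB_p2 mu p + FB_p2 mu q) / (INR mu * (sx ^ 2 + sy ^ 2)).
Definition FB_rho (mu : nat) (p q : nat -> R) : R :=
  sqrt (FB_p2 mu p / FB_p2 mu q).
Definition FB_eta (sx sy : R) : R := sx ^ 2 / sy ^ 2.

Definition FB_MGF (gbar kappa : R) (mu : nat) (m eta rho s : R) : R :=
  let mu' := INR mu in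
  / (Rpower (1 - 2 * eta * gbar * s / (mu' * (1 + eta) * (1 + kappa))) (mu' / 2)
     * Rpower (1 - 2 * gbar * s / (mu' * (1 + eta) * (1 + kappa))) (mu' / 2))
  * Rpower
      (1 - / m *
        (mu' * kappa * (rho ^ 2 / (1 + rho ^ 2)) * (1 + eta) * gbar * s
           / ((1 + eta) * (1 + kappa) * mu' - 2 * eta * gbar * s)
         + mu' * kappa * (1 / (1 + rho ^ 2)) * (1 + eta) * gbar * s
           / ((1 + eta) * (1 + kappa) * mu' - 2 * gbar * s)))
      (- m).

(* Main.v *)
Require Import Defs.
From Coquelicot Require Import Coquelicot.
From Stdlib Require Import Reals Lra Lia FunctionalExtensionality Classical_Prop.
Open Scope R_scope.

Definition LimP (P : R -> R) (L : R) : Prop :=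
  forall eps, 0 < eps -> exists M, forall x, M <= x -> Rabs (P x - L) < eps.
Definition LimM (P : R -> R) (L : R) : Prop := LimP (fun x => P (- x)) L.

Lemma LimP_plus P Q L1 L2 : LimP P L1 -> LimP Q L2 -> LimP (fun x => P x + Q x) (L1 + L2).
Proof.
  intros HP HQ eps He. destruct (HP (eps/2) ltac:(lra)) as [M1 H1].
  destruct (HQ (eps/2) ltac:(lra)) as [M2 H2].
  exists (Rmax M1 M2). intros x Hx.
  pose proof (H1 x (Rle_trans _ _ _ (Rmax_l _ _) Hx)).
  pose proof (H2 x (Rle_trans _ _ _ (Rmax_r _ _) Hx)).
  replace (P x + Q x - (L1 + L2)) with ((P x - L1) + (Q x - L2)) by ring.
  eapply Rle_lt_trans. apply Rabs_triang. lra.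
Qed.

Lemma LimP_scal P L c : LimP P L -> LimP (fun x => c * P x) (c * L).
Proof.
  intros HP eps He. destruct (HP (eps / (Rabs c + 1))) as [M HM].
  { apply Rdiv_lt_0_compat. lra. pose proof (Rabs_pos c); lra. }
  exists M. intros x Hx. specialize (HM x Hx).
  replace (c * P x - c * L) with (c * (P x - L)) by ring. rewrite Rabs_mult.
  pose proof (Rabs_pos c). pose proof (Rabs_pos (P x - L)).
  apply Rle_lt_trans with ((Rabs c + 1) * Rabs (P x - L)). nra.
  replace eps with ((Rabs c + 1) * (eps / (Rabs c + 1))) by (field; lra).
  apply Rmult_lt_compat_l. lra. auto.
Qed.

Lemma LimP_const c : LimP (fun _ => c) c.
Proof. intros eps He. exists 0. intros. rewrite Rminus_diag, Rabs_R0. auto. Qed.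

Lemma LimP_ext P Q L : (forall x, P x = Q x) -> LimP P L -> LimP Q L.
Proof. intros E HP eps He. destruct (HP eps He) as [M HM]. exists M. intros. rewrite <- E. auto. Qed.

Lemma LimP_comp P g L : LimP P L -> (forall M, exists N, forall x, N <= x -> M <= g x) ->
  LimP (fun x => P (g x)) L.
Proof.
  intros HP Hg eps He. destruct (HP eps He) as [M HM]. destruct (Hg M) as [N HN].
  exists N. intros. apply HM. auto.
Qed.

Lemma lin_to_infty r v : 0 < r -> forall M, exists N, forall x, N <= x -> M <= r * x + v.
Proof.
  intros Hr M. exists ((M - v) / r). intros x Hx.
  apply Rmult_le_compat_l with (r := r) in Hx; [|lra].
  replace (r * ((M - v) / r)) with (M - v) in Hx by (field; lra). lra.
Qed.

Definition Prim (f P : R -> R) : Prop := forall a b, is_RInt f a b (P b - P a).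

Definition PL (f : R -> R) (l : R) : Prop :=
  exists P L1 L2, Prim f P /\ LimP P L1 /\ LimM P L2 /\ l = L1 - L2.

Lemma Prim_ex f P a b : Prim f P -> ex_RInt f a b.
Proof. intros H. exists (P b - P a). apply H. Qed.

Lemma PL_imp f l : PL f l -> ImpInt_R f l.
Proof.
  intros (P & L1 & L2 & HP & H1 & H2 & ->) eps He.
  destruct (H1 (eps/2) ltac:(lra)) as [M1 HM1].
  destruct (H2 (eps/2) ltac:(lra)) as [M2 HM2].
  exists (Rmax 1 (Rmax M1 M2)). split. { eapply Rlt_le_trans. 2: apply Rmax_l. lra. }
  intros a b Ha Hb.
  assert (Hi : ex_RInt f (- a) b) by (eapply Prim_ex; eauto).
  exists (ex_RInt_Reals_0 _ _ _ Hi).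
  rewrite <- RInt_Reals. rewrite (is_RInt_unique _ _ _ _ (HP (- a) b)).
  assert (M1 <= b) by (repeat (eapply Rle_trans; [|exact Hb]); eapply Rle_trans; [apply Rmax_l|apply Rmax_r]).
  assert (M2 <= a) by (repeat (eapply Rle_trans; [|exact Ha]); eapply Rle_trans; [apply Rmax_r|apply Rmax_r]).
  specialize (HM1 b H). specialize (HM2 a H0). simpl in HM2.
  replace (P b - P (- a) - (L1 - L2)) with ((P b - L1) - (P (- a) - L2)) by ring.
  eapply Rle_lt_trans. apply Rabs_triang. rewrite Rabs_Ropp. lra.
Qed.

Lemma Prim_deriv f P : (forall x, is_derive P x (f x)) -> (forall x, continuous f x) -> Prim f P.
Proof.
  intros Hd Hc a b. apply (is_RInt_derive (V:=R_CompleteNormedModule) P f).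
  intros; apply Hd. intros; apply Hc.
Qed.

Lemma PL_plus f g l1 l2 : PL f l1 -> PL g l2 -> PL (fun x => f x + g x) (l1 + l2).
Proof.
  intros (P & L1 & L2 & HP & H1 & H2 & ->) (Q & K1 & K2 & HQ & G1 & G2 & ->).
  exists (fun x => P x + Q x), (L1 + K1), (L2 + K2). repeat split.
  - intros a b. replace (P b + Q b - (P a + Q a)) with (plus (P b - P a) (Q b - Q a)).
    2:{ unfold plus; simpl. ring. }
    apply (is_RInt_plus (V:=R_NormedModule) f g). apply HP. apply HQ.
  - apply LimP_plus; auto.
  - apply (LimP_plus (fun x => P (- x)) (fun x => Q (- x))); auto.
  - ring.
Qed.

Lemma PL_scal f l c : PL f l -> PL (fun x => c * f x) (c * l).
Proof.
  intros (P & L1 & L2 & HP & H1 & H2 & ->).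
  exists (fun x => c * P x), (c * L1), (c * L2). repeat split.
  - intros a b. replace (c * P b - c * P a) with (scal c (P b - P a)).
    2:{ unfold scal; simpl; unfold mult; simpl. ring. }
    apply (is_RInt_scal (V:=R_NormedModule) f). apply HP.
  - apply LimP_scal; auto.
  - apply (LimP_scal (fun x => P (- x))); auto.
  - ring.
Qed.

Lemma PL_ext f g l : (forall x, f x = g x) -> PL f l -> PL g l.
Proof.
  intros E (P & L1 & L2 & HP & H1 & H2 & ->).
  exists P, L1, L2. repeat split; auto.
  intros a b. apply (is_RInt_ext (V:=R_NormedModule) f). intros; auto. apply HP.
Qed.

Lemma PL_eq f l l' : l = l' -> PL f l -> PL f l'.
Proof. intros ->; auto. Qed.

Lemma PL_deriv0 f Q : (forall x, is_derive Q x (f x)) -> (forall x, continuous f x) ->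
  LimP Q 0 -> LimM Q 0 -> PL f 0.
Proof.
  intros Hd Hc H1 H2. exists Q, 0, 0. repeat split; auto. apply Prim_deriv; auto. ring.
Qed.

Lemma exd_cont (f : R -> R) x : ex_derive f x -> continuous f x.
Proof. intros H. apply (ex_derive_continuous (K:=R_AbsRing) (V:=R_NormedModule)). exact H. Qed.

Lemma exRI_cont (f : R -> R) a b : (forall z, Rmin a b <= z <= Rmax a b -> continuous f z) -> ex_RInt f a b.
Proof. intros H. apply (ex_RInt_continuous (V:=R_CompleteNormedModule)). exact H. Qed.

Definition gf (t : R) : R := exp (- (t ^ 2)).
Definition G (x : R) : R := RInt gf 0 x.

Lemma gf_cont x : continuous gf x.
Proof. apply exd_cont. unfold gf. auto_derive. auto. Qed.

Lemma gf_ex a b : ex_RInt gf a b.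
Proof. apply exRI_cont. intros; apply gf_cont. Qed.

Lemma G_derive x : is_derive G x (gf x).
Proof.
  apply is_derive_RInt with (a := 0).
  - apply filter_forall. intros y. apply (RInt_correct (V:=R_CompleteNormedModule)), gf_ex.
  - apply gf_cont.
Qed.

Definition uf (x t : R) : R := exp (- (x ^ 2 * (1 + t ^ 2))) / (1 + t ^ 2).
Definition du (x t : R) : R := - (2 * x * exp (- (x ^ 2 * (1 + t ^ 2)))).

Lemma one_t2_pos t : 0 < 1 + t ^ 2.
Proof. nra. Qed.

Lemma uf_derive x t : is_derive (fun z => uf z t) x (du x t).
Proof.
  unfold uf, du. auto_derive.
  - pose proof (one_t2_pos t); lra.
  - pose proof (one_t2_pos t). replace (x * (x * 1) * (1 + t * (t * 1))) with (x ^ 2 * (1 + t ^ 2)) by ring. field. lra.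
Qed.

Lemma du_cont x t : continuity_2d_pt (fun u v => Derive (fun z => uf z v) u) x t.
Proof.
  apply continuity_2d_pt_ext with (f := du).
  { intros u v. symmetry. apply is_derive_unique, uf_derive. }
  unfold du.
  apply continuity_2d_pt_opp.
  apply continuity_2d_pt_mult.
  - apply continuity_2d_pt_mult. apply continuity_2d_pt_const. apply continuity_2d_pt_id1.
  - apply continuity_1d_2d_pt_comp with (f := exp).
    + apply derivable_continuous_pt, derivable_pt_exp.
    + apply continuity_2d_pt_opp.
      apply continuity_2d_pt_ext with (f := fun u v => (u * u) * (1 + v * v)).
      { intros; simpl; ring. }
      apply continuity_2d_pt_mult.
      * apply continuity_2d_pt_mult; apply continuity_2d_pt_id1.
      * apply continuity_2d_pt_plus. apply continuity_2d_pt_const.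
        apply continuity_2d_pt_mult; apply continuity_2d_pt_id2.
Qed.

Lemma uf_cont x t : continuous (fun t => uf x t) t.
Proof.
  apply exd_cont. unfold uf. auto_derive.
  pose proof (one_t2_pos t); lra.
Qed.

Lemma uf_ex x a b : ex_RInt (fun t => uf x t) a b.
Proof. apply exRI_cont. intros; apply uf_cont. Qed.

Definition Hq01 (x : R) : R := RInt (fun t => uf x t) 0 1.

Lemma H_derive x : is_derive Hq01 x (RInt (fun t => du x t) 0 1).
Proof.
  unfold Hq01.
  replace (RInt (fun t => du x t) 0 1) with (RInt (fun t => Derive (fun u => uf u t) x) 0 1).
  2:{ apply RInt_ext. intros. apply is_derive_unique, uf_derive. }
  apply (is_derive_RInt_param (fun u t => uf u t)).
  - apply filter_forall. intros y t _. eexists. apply uf_derive.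
  - intros t _. apply du_cont.
  - apply filter_forall. intros y. apply uf_ex.
Qed.

Lemma RInt_du x : RInt (fun t => du x t) 0 1 = - 2 * gf x * G x.
Proof.
  transitivity (RInt (fun t => scal (- 2 * gf x) (scal x (gf (x * t + 0)))) 0 1).
  { apply RInt_ext. intros t _. unfold du, gf, scal; simpl; unfold mult; simpl.
    assert (E: exp (- (x*(x*1)*(1+t*(t*1)))) = exp (-(x*(x*1))) * exp (-((x*t+0)*((x*t+0)*1)))) by (rewrite <- exp_plus; f_equal; ring).
    rewrite E; ring. }
  rewrite (RInt_scal (V:=R_CompleteNormedModule)).
  2:{ apply exRI_cont. intros. apply exd_cont. unfold gf, scal; simpl; unfold mult; simpl. auto_derive. auto. }
  rewrite (RInt_comp_lin (V:=R_CompleteNormedModule)). 2: apply gf_ex.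
  unfold G, scal; simpl; unfold mult; simpl. replace (x * 0 + 0) with 0 by ring.
  replace (x * 1 + 0) with x by ring. ring.
Qed.

Definition hh (x : R) : R := G x * G x + Hq01 x.

Lemma hh_derive x : is_derive hh x 0.
Proof.
  unfold hh.
  replace 0 with (plus (plus (mult (gf x) (G x)) (mult (G x) (gf x))) (RInt (fun t => du x t) 0 1)).
  2:{ rewrite RInt_du. unfold plus, mult; simpl. ring. }
  apply (is_derive_plus (K:=R_AbsRing) (V:=R_NormedModule) (fun x => G x * G x) Hq01).
  - apply (is_derive_mult G G). apply G_derive. apply G_derive. intros; apply Rmult_comm.
  - apply H_derive.
Qed.

Lemma hh0 : hh 0 = PI / 4.
Proof.
  unfold hh, G, Hq01. rewrite RInt_point. unfold zero; simpl.
  rewrite <- atan_1.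
  replace (RInt (fun t => uf 0 t) 0 1) with (RInt (fun t => / (1 + t ^ 2)) 0 1).
  2:{ apply RInt_ext. intros t _. unfold uf. replace (- (0 ^ 2 * (1 + t ^ 2))) with 0 by ring.
      rewrite exp_0. unfold Rdiv. rewrite Rmult_1_l; reflexivity. }
  rewrite (is_RInt_unique _ 0 1 (minus (atan 1) (atan 0))).
  - rewrite atan_0. unfold minus, plus, opp; simpl. ring.
  - apply (is_RInt_derive atan).
    + intros. apply is_derive_Reals, derivable_pt_lim_atan.
    + intros. apply exd_cont. auto_derive. pose proof (one_t2_pos x); lra.
Qed.

Lemma hh_const x : 0 < x -> hh x = PI / 4.
Proof.
  intros Hx. rewrite <- hh0. symmetry. apply eq_is_derive; auto.
  intros; apply hh_derive.
Qed.

Lemma exp_mono x y : x <= y -> exp x <= exp y.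
Proof. intros [h|h]. left; apply exp_increasing; auto. subst; lra. Qed.

Lemma exp_neg_bound y : 0 <= y -> exp (- y) <= / (1 + y).
Proof.
  intros Hy. rewrite exp_Ropp. apply Rinv_le_contravar. lra. apply exp_ineq1_le.
Qed.

Lemma H_bounds x : 0 <= Hq01 x <= exp (- (x ^ 2)).
Proof.
  unfold Hq01. split.
  - apply RInt_ge_0. lra. apply uf_ex. intros t _. unfold uf.
    apply Rle_mult_inv_pos. apply Rlt_le, exp_pos. apply one_t2_pos.
  - apply Rle_trans with (RInt (fun _ => exp (- (x ^ 2))) 0 1).
    + apply RInt_le. lra. apply uf_ex. apply ex_RInt_const.
      intros t _. unfold uf. pose proof (one_t2_pos t).
      assert (exp (- (x ^ 2 * (1 + t ^ 2))) <= exp (- (x ^ 2))).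
      { apply exp_mono. nra. }
      assert (0 < / (1 + t ^ 2) <= 1).
      { split. apply Rinv_0_lt_compat; lra. rewrite <- Rinv_1. apply Rinv_le_contravar; nra. }
      pose proof (exp_pos (- (x ^ 2 * (1 + t ^ 2)))).
      unfold Rdiv. nra.
    + rewrite RInt_const. unfold scal; simpl; unfold mult; simpl. lra.
Qed.


Lemma G_ge0 x : 0 <= x -> 0 <= G x.
Proof. intros. unfold G. apply RInt_ge_0; auto. apply gf_ex. intros; unfold gf; apply Rlt_le, exp_pos. Qed.

Lemma G_lim : LimP G (sqrt PI / 2).
Proof.
  intros eps Heps.
  set (c := sqrt PI / 2).
  assert (Hc : 0 < c). { unfold c. pose proof (sqrt_lt_R0 PI PI_RGT_0). lra. }
  assert (Hc2 : c * c = PI / 4).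
  { unfold c. replace (sqrt PI / 2 * (sqrt PI / 2)) with (sqrt PI * sqrt PI / 4) by field.
    rewrite sqrt_sqrt. auto. left; apply PI_RGT_0. }
  exists (Rmax 1 (/ (eps * c))). intros x Hx.
  assert (Hx1 : 1 <= x) by (eapply Rle_trans; [apply Rmax_l | exact Hx]).
  assert (Hx2 : / (eps * c) <= x) by (eapply Rle_trans; [apply Rmax_r | exact Hx]).
  assert (HG : G x * G x = PI / 4 - Hq01 x).
  { pose proof (hh_const x ltac:(lra)) as Hhc. unfold hh in Hhc. lra. }
  pose proof (G_ge0 x ltac:(lra)) as HG0.
  destruct (H_bounds x) as [HH0 HH1].
  assert (HB : exp (- (x ^ 2)) < eps * c).
  { eapply Rle_lt_trans. apply exp_neg_bound. nra.
    assert (0 < eps * c) by nra.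
    apply Rlt_le_trans with (/ x).
    - apply Rinv_lt_contravar; nra.
    - rewrite <- (Rinv_inv (eps * c)). apply Rinv_le_contravar. apply Rinv_0_lt_compat; lra. lra. }
  assert (E : (G x - c) * (G x + c) = - Hq01 x) by nra.
  apply Rabs_def1.
  - assert (G x - c <= 0) by nra. lra.
  - assert (- (G x - c) * (G x + c) <= exp (- (x ^ 2))) by nra.
    assert (- (G x - c) * c <= exp (- (x ^ 2))) by nra.
    nra.
Qed.

Lemma is_derive_eq (f : R -> R) x l l' : is_derive f x l -> l = l' -> is_derive f x l'.
Proof. intros H ->; auto. Qed.

Lemma G_odd y : G (- y) = - G y.
Proof.
  unfold G.
  transitivity (RInt (fun t => scal (-1) (gf (-1 * t + 0))) 0 y).
  - rewrite (RInt_comp_lin (V:=R_CompleteNormedModule)). 2: apply gf_ex.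
    f_equal; ring.
  - transitivity (RInt (fun t => scal (-1) (gf t)) 0 y).
    + apply RInt_ext. intros t _. unfold gf. f_equal. f_equal. f_equal. ring.
    + rewrite (RInt_scal (V:=R_CompleteNormedModule)). 2: apply gf_ex.
      unfold scal; simpl; unfold mult; simpl. ring.
Qed.

Lemma G_comp_derive r v x : is_derive (fun x => G (r * x + v)) x (r * gf (r * x + v)).
Proof.
  apply (is_derive_comp (K:=R_AbsRing) (V:=R_NormedModule) G (fun x => r * x + v)).
  apply G_derive. auto_derive; auto. ring.
Qed.

Lemma PL_gauss (al be ga : R) : 0 < al ->
  PL (fun x => exp (- al * x ^ 2 + be * x + ga)) (sqrt (PI / al) * exp (be ^ 2 / (4 * al) + ga)).
Proof.
  intros Hal.
  set (r := sqrt al). assert (Hr : 0 < r) by (apply sqrt_lt_R0; auto).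
  assert (Hr2 : r * r = al) by (apply sqrt_sqrt; lra).
  set (v := - be / (2 * r)).
  set (C := exp (be ^ 2 / (4 * al) + ga)).
  exists (fun x => C / r * G (r * x + v)), (C / r * (sqrt PI / 2)), (C / r * (- (sqrt PI / 2))).
  repeat split.
  - apply Prim_deriv.
    + intros x. apply is_derive_eq with (C / r * (r * gf (r * x + v))).
      apply is_derive_scal. apply G_comp_derive.
      unfold gf, C. field_simplify. 2: lra. rewrite <- exp_plus. f_equal. unfold v.
      rewrite <- Hr2. field. lra.
    + intros x. apply exd_cont. auto_derive. auto.
  - apply LimP_scal. apply (LimP_comp G (fun x => r * x + v)). apply G_lim. apply lin_to_infty; auto.
  - unfold LimM. apply LimP_ext with (fun x => C / r * (- 1 * G (r * x + - v))).
    { intros x. replace (r * - x + v) with (- (r * x + - v)) by ring. rewrite G_odd. ring. }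
    apply LimP_scal. replace (- (sqrt PI / 2)) with (-1 * (sqrt PI / 2)) by ring. apply LimP_scal.
    apply (LimP_comp G (fun x => r * x + - v)). apply G_lim. apply lin_to_infty; auto.
  - rewrite sqrt_div_alt; auto. fold r. fold C. field. lra.
Qed.

Lemma LimP_inv_bound P K : 0 < K -> (forall x, 1 <= x -> Rabs (P x) <= K / x) -> LimP P 0.
Proof.
  intros HK HB eps He. exists (Rmax 1 (2 * K / eps)). intros x Hx.
  assert (1 <= x) by (eapply Rle_trans; [apply Rmax_l|exact Hx]).
  assert (2 * K / eps <= x) by (eapply Rle_trans; [apply Rmax_r|exact Hx]).
  rewrite Rminus_0_r. eapply Rle_lt_trans. apply HB; auto.
  apply Rmult_le_compat_r with (r := eps) in H0; [|lra].
  replace (2 * K / eps * eps) with (2 * K) in H0 by (field; lra).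
  unfold Rdiv. apply Rmult_lt_reg_r with x. lra. rewrite Rmult_assoc, Rinv_l; lra.
Qed.

Lemma gexp_bound al x : 0 < al -> 1 <= x ->
  Rabs (exp (- al * x ^ 2)) <= (/ al) / x /\ Rabs (x * exp (- al * x ^ 2)) <= (/ al) / x.
Proof.
  intros Hal Hx.
  assert (E : exp (- al * x ^ 2) <= / (1 + al * x ^ 2)).
  { replace (- al * x ^ 2) with (- (al * x ^ 2)) by ring. apply exp_neg_bound. nra. }
  pose proof (exp_pos (- al * x ^ 2)).
  assert (Hd : 0 < 1 + al * x ^ 2) by nra.
  assert (E2 : exp (- al * x ^ 2) * (1 + al * x ^ 2) <= 1).
  { apply Rmult_le_compat_r with (r := 1 + al * x ^ 2) in E; [|lra].
    rewrite Rinv_l in E; lra. }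
  rewrite Rabs_right by lra. rewrite Rabs_right by nra.
  split.
  - apply Rmult_le_reg_r with (al * x). nra.
    replace (/ al / x * (al * x)) with 1 by (field; split; lra). nra.
  - apply Rmult_le_reg_r with (al * x). nra.
    replace (/ al / x * (al * x)) with 1 by (field; split; lra). nra.
Qed.

Lemma PL_x1 al : 0 < al -> PL (fun x => x * exp (- al * x ^ 2)) 0.
Proof.
  intros Hal.
  apply PL_deriv0 with (fun x => - / (2 * al) * exp (- al * x ^ 2)).
  - intros x. auto_derive; auto. replace (- al * (x * (x * 1))) with (- al * x ^ 2) by ring. field. lra.
  - intros x. apply exd_cont. auto_derive. auto.
  - replace 0 with (- / (2 * al) * 0) by ring. apply LimP_scal.
    apply LimP_inv_bound with (/ al). apply Rinv_0_lt_compat; lra.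
    intros; apply gexp_bound; auto.
  - unfold LimM. replace 0 with (- / (2 * al) * 0) by ring. apply LimP_scal.
    apply LimP_inv_bound with (/ al). apply Rinv_0_lt_compat; lra.
    intros. replace ((- x) ^ 2) with (x ^ 2) by ring. apply gexp_bound; auto.
Qed.

Lemma PL_x0 al : 0 < al -> PL (fun x => exp (- al * x ^ 2)) (sqrt (PI / al)).
Proof.
  intros Hal. eapply PL_eq. 2: eapply PL_ext. 3: apply (PL_gauss al 0 0 Hal).
  - replace (0 ^ 2 / (4 * al) + 0) with 0 by (field; lra). rewrite exp_0. ring.
  - intros x. simpl. f_equal. ring.
Qed.

Lemma PL_x2 al : 0 < al -> PL (fun x => x ^ 2 * exp (- al * x ^ 2)) (sqrt (PI / al) / (2 * al)).
Proof.
  intros Hal.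
  assert (Hd : PL (fun x => exp (- al * x ^ 2) - 2 * al * (x ^ 2 * exp (- al * x ^ 2))) 0).
  { apply PL_deriv0 with (fun x => x * exp (- al * x ^ 2)).
    - intros x. auto_derive; auto. replace (- al * (x * (x * 1))) with (- al * x ^ 2) by ring. ring.
    - intros x. apply exd_cont. auto_derive. auto.
    - apply LimP_inv_bound with (/ al). apply Rinv_0_lt_compat; lra.
      intros; apply gexp_bound; auto.
    - unfold LimM. apply LimP_ext with (fun x => -1 * (x * exp (- al * x ^ 2))).
      { intros x. replace ((- x) ^ 2) with (x ^ 2) by ring. ring. }
      replace 0 with (-1 * 0) by ring. apply LimP_scal.
      apply LimP_inv_bound with (/ al). apply Rinv_0_lt_compat; lra.
      intros; apply gexp_bound; auto. }
  pose proof (PL_x0 al Hal) as H0.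
  pose proof (PL_plus _ _ _ _ H0 (PL_scal _ _ (-1) Hd)) as H1.
  pose proof (PL_scal _ _ (/ (2 * al)) H1) as H2.
  eapply PL_eq. 2: eapply PL_ext. 3: exact H2.
  - field. lra.
  - intros x. simpl. field. lra.
Qed.

Lemma sqrt_gauss_norm sg : 0 < sg -> sqrt (PI / (/ (2 * sg ^ 2))) = sqrt (2 * PI) * sg.
Proof.
  intros Hs. replace (PI / (/ (2 * sg ^ 2))) with ((2 * PI) * (sg * sg)) by (field; lra).
  rewrite sqrt_mult. rewrite sqrt_square by lra. auto.
  pose proof PI_RGT_0; lra. nra.
Qed.

Lemma gauss_pdf_eq sg x : 0 < sg ->
  gauss_pdf sg x = / (sqrt (2 * PI) * sg) * exp (- (/ (2 * sg ^ 2)) * x ^ 2).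
Proof.
  intros Hs. unfold gauss_pdf, Rdiv. rewrite Rmult_comm. f_equal. f_equal. field. lra.
Qed.

Lemma sqrt2pi_pos : 0 < sqrt (2 * PI).
Proof. apply sqrt_lt_R0. pose proof PI_RGT_0; lra. Qed.

Lemma PL_g0 sg : 0 < sg -> PL (gauss_pdf sg) 1.
Proof.
  intros Hs. assert (Ha : 0 < / (2 * sg ^ 2)) by (apply Rinv_0_lt_compat; nra).
  pose proof (PL_scal _ _ (/ (sqrt (2 * PI) * sg)) (PL_x0 _ Ha)) as H.
  eapply PL_eq. 2: eapply PL_ext. 3: exact H.
  - rewrite sqrt_gauss_norm by auto. field. pose proof sqrt2pi_pos; lra.
  - intros x. rewrite gauss_pdf_eq; auto.
Qed.

Lemma PL_g2 sg a : 0 < sg -> PL (fun x => gauss_pdf sg x * (x + a) ^ 2) (sg ^ 2 + a ^ 2).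
Proof.
  intros Hs. assert (Ha : 0 < / (2 * sg ^ 2)) by (apply Rinv_0_lt_compat; nra).
  set (al := / (2 * sg ^ 2)) in *.
  pose proof (PL_plus _ _ _ _ (PL_x2 _ Ha) (PL_plus _ _ _ _ (PL_scal _ _ (2 * a) (PL_x1 _ Ha))
     (PL_scal _ _ (a ^ 2) (PL_x0 _ Ha)))) as H.
  pose proof (PL_scal _ _ (/ (sqrt (2 * PI) * sg)) H) as H2.
  pose proof sqrt2pi_pos.
  eapply PL_eq. 2: eapply PL_ext. 3: exact H2.
  - unfold al. rewrite sqrt_gauss_norm by auto. field. lra.
  - intros x. rewrite gauss_pdf_eq; auto. fold al. ring.
Qed.

Definition gexpo (sg t a : R) : R := - / 2 * ln (1 - 2 * t * sg ^ 2) + t * a ^ 2 / (1 - 2 * t * sg ^ 2).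

Lemma PL_gmgf sg t a : 0 < sg -> t <= 0 ->
  PL (fun x => gauss_pdf sg x * exp (t * (x + a) ^ 2)) (exp (gexpo sg t a)).
Proof.
  intros Hs Ht.
  set (al := / (2 * sg ^ 2) - t).
  assert (Hal : 0 < al). { unfold al. assert (0 < / (2 * sg ^ 2)) by (apply Rinv_0_lt_compat; nra). lra. }
  pose proof (PL_scal _ _ (/ (sqrt (2 * PI) * sg)) (PL_gauss al (2 * t * a) (t * a ^ 2) Hal)) as H.
  pose proof sqrt2pi_pos.
  set (D := 1 - 2 * t * sg ^ 2).
  assert (HD : 0 < D) by (unfold D; nra).
  assert (Hal_eq : al = D / (2 * sg ^ 2)) by (unfold al, D; field; lra).
  eapply PL_eq. 2: eapply PL_ext. 3: exact H.
  - unfold gexpo. fold D.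
    assert (E1 : exp (- / 2 * ln D) = / sqrt D).
    { rewrite <- Rpower_sqrt by auto. unfold Rpower. rewrite <- exp_Ropp. f_equal. ring. }
    assert (E2 : sqrt (PI / al) = sqrt (2 * PI) * sg / sqrt D).
    { replace (PI / al) with ((2 * PI) * (sg * sg) / D) by (rewrite Hal_eq; field; split; lra).
      rewrite sqrt_div_alt by auto. rewrite sqrt_mult. rewrite sqrt_square by lra. auto.
      pose proof PI_RGT_0; lra. nra. }
    rewrite E2.
    replace ((2 * t * a) ^ 2 / (4 * al) + t * a ^ 2) with (t * a ^ 2 / D).
    2:{ rewrite Hal_eq. unfold D. field. split. lra. fold D. lra. }
    rewrite exp_plus, E1.
    pose proof (sqrt_lt_R0 D HD). field. split; lra.
  - intros x. rewrite gauss_pdf_eq; auto. rewrite (Rmult_assoc (/ _)), <- exp_plus. f_equal. f_equal. unfold al. ring.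
Qed.

Lemma exp_INR_mult n x : exp (INR n * x) = exp x ^ n.
Proof.
  induction n. simpl. rewrite Rmult_0_l. apply exp_0.
  rewrite S_INR. replace ((INR n + 1) * x) with (INR n * x + x) by ring.
  rewrite exp_plus, IHn. simpl. ring.
Qed.

Lemma pow_exp_bound (n : nat) t : 0 <= t -> t ^ S n <= (2 * INR (S n)) ^ S n * exp (t / 2).
Proof.
  intros Ht. assert (Hk : 0 < INR (S n)) by (apply lt_0_INR; lia).
  replace (t / 2) with (INR (S n) * (t / (2 * INR (S n)))) by (field; lra).
  rewrite exp_INR_mult.
  set (k := INR (S n)) in *.
  apply Rle_trans with ((2 * k) ^ S n * (t / (2 * k)) ^ S n).
  - rewrite <- Rpow_mult_distr. right. f_equal. field. lra.
  - apply Rmult_le_compat_l. apply pow_le; lra.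
    apply pow_incr. split. apply Rmult_le_pos; [lra|]. apply Rlt_le, Rinv_0_lt_compat; lra.
    pose proof (exp_ineq1_le (t / (2 * k))).
    assert (0 <= t / (2 * k)). { apply Rmult_le_pos; [lra|]. apply Rlt_le, Rinv_0_lt_compat; lra. }
    lra.
Qed.

Lemma Rpower_le_exp t a b : 1 <= t -> a <= b -> Rpower t a <= Rpower t b.
Proof.
  intros Ht Hab. unfold Rpower. apply exp_mono. assert (0 <= ln t).
  { rewrite <- ln_1. apply ln_le; lra. } nra.
Qed.

Lemma Rpower_exp_bound m : exists K, 0 < K /\ forall t, 1 <= t ->
  Rpower t m * exp (- t) <= K * exp (- (t / 2)).
Proof.
  destruct (INR_unbounded m) as [n Hn].
  exists ((2 * INR (S n)) ^ S n). split.
  { apply pow_lt. assert (0 < INR (S n)) by (apply lt_0_INR; lia). lra. }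
  intros t Ht.
  apply Rle_trans with (t ^ S n * exp (- t)).
  - apply Rmult_le_compat_r. apply Rlt_le, exp_pos.
    rewrite <- Rpower_pow by lra. apply Rpower_le_exp; auto. rewrite S_INR. lra.
  - pose proof (pow_exp_bound n t ltac:(lra)).
    replace (- t) with (- (t / 2) + - (t / 2)) by field. rewrite exp_plus.
    replace (exp (t / 2)) with (/ exp (- (t / 2))) in H.
    2:{ rewrite exp_Ropp, Rinv_inv. auto. }
    pose proof (exp_pos (- (t / 2))).
    apply Rmult_le_compat_r with (r := exp (- (t / 2))) in H; [|lra].
    rewrite Rmult_assoc, Rinv_l in H by lra.
    apply Rle_trans with (exp (- (t / 2)) * (exp (- (t / 2)) * t ^ S n)).
    + right; ring.
    + rewrite Rmult_comm. apply Rmult_le_compat_r. lra.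
      apply Rle_trans with ((2 * INR (S n)) ^ S n * 1). rewrite Rmult_comm, Rmult_1_r. lra.
      right; ring.
Qed.

Lemma locally_pos y (P : R -> Prop) : 0 < y -> (forall z, 0 < z -> P z) -> locally y P.
Proof.
  intros Hy HP. assert (Hy2 : 0 < y / 2) by lra.
  exists (mkposreal _ Hy2). intros z Hz. apply HP.
  unfold ball in Hz; simpl in Hz; unfold AbsRing_ball, abs, minus, plus, opp in Hz; simpl in Hz.
  apply Rabs_def2 in Hz. lra.
Qed.

Lemma Rpower_derive a t : 0 < t -> is_derive (fun x => Rpower x a) t (a * Rpower t (a - 1)).
Proof. intros Ht. apply is_derive_Reals, derivable_pt_lim_power; auto. Qed.

Lemma Rpower_cont a t : 0 < t -> continuous (fun x => Rpower x a) t.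
Proof. intros Ht. apply exd_cont. eexists. apply Rpower_derive; auto. Qed.

Lemma Rpower_pos' x a : 0 < Rpower x a.
Proof. unfold Rpower. apply exp_pos. Qed.

Lemma is_derive_extR (f g : R -> R) x l : (forall t, f t = g t) -> is_derive f x l -> is_derive g x l.
Proof. intros E H. eapply is_derive_ext; eauto. Qed.

Definition fm (m t : R) : R := Rpower t (m - 1) * exp (- t).

Lemma fm_derive m t : 0 < t ->
  is_derive (fm m) t ((m - 1) * Rpower t (m - 1 - 1) * exp (- t) + Rpower t (m - 1) * - exp (- t)).
Proof.
  intros Ht. unfold fm.
  apply (is_derive_mult (K:=R_AbsRing) (fun x => Rpower x (m - 1)) (fun x => exp (- x))).
  apply Rpower_derive; auto. auto_derive; auto. ring. intros; apply Rmult_comm.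
Qed.

Lemma fm_cont m t : 0 < t -> continuous (fm m) t.
Proof. intros Ht. apply exd_cont. eexists. apply fm_derive; auto. Qed.

Lemma fm_pos m t : 0 < fm m t.
Proof. unfold fm. apply Rmult_lt_0_compat. apply Rpower_pos'. apply exp_pos. Qed.

Lemma fm_ex m a b : 0 < a -> 0 < b -> ex_RInt (fm m) a b.
Proof.
  intros Ha Hb. apply exRI_cont. intros z Hz. apply fm_cont.
  assert (0 < Rmin a b) by (apply Rmin_glb_lt; auto). lra.
Qed.

Definition Pm (m y : R) : R := RInt (fm m) 1 y.

Definition PrimPos (f P : R -> R) : Prop :=
  forall a b, 0 < a -> 0 < b -> is_RInt f a b (P b - P a).

Lemma Pm_prim m : PrimPos (fm m) (Pm m).
Proof.
  intros a b Ha Hb. unfold Pm.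
  rewrite <- (RInt_Chasles (V:=R_CompleteNormedModule) (fm m) 1 a b).
  2,3: apply fm_ex; lra.
  change (plus (RInt (fm m) 1 a) (RInt (fm m) a b)) with (RInt (fm m) 1 a + RInt (fm m) a b).
  assert (E : forall x y : R, x + y - x = y) by (intros; ring). rewrite E.
  apply (RInt_correct (V:=R_CompleteNormedModule)). apply fm_ex; lra.
Qed.

Lemma Pm_derive m y : 0 < y -> is_derive (Pm m) y (fm m y).
Proof.
  intros Hy. apply is_derive_RInt with (a := 1).
  - apply locally_pos; auto. intros z Hz. apply (RInt_correct (V:=R_CompleteNormedModule)). apply fm_ex; lra.
  - apply fm_cont; auto.
Qed.

Lemma Pm_mono m x y : 0 < x -> x <= y -> Pm m x <= Pm m y.
Proof.
  intros Hx Hxy. pose proof (Pm_prim m x y Hx ltac:(lra)) as H.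
  assert (0 <= RInt (fm m) x y).
  { apply RInt_ge_0; auto. apply fm_ex; lra. intros; apply Rlt_le, fm_pos. }
  rewrite (is_RInt_unique _ _ _ _ H) in H0. lra.
Qed.

Lemma Pm_1 m : Pm m 1 = 0.
Proof. unfold Pm. rewrite RInt_point. reflexivity. Qed.

Lemma Pm_upper m : exists B, forall y, 1 <= y -> Pm m y <= B.
Proof.
  destruct (Rpower_exp_bound m) as [K [HK HB]].
  exists (2 * K). intros y Hy.
  unfold Pm.
  apply Rle_trans with (RInt (fun t => K * exp (- (t / 2))) 1 y).
  - apply RInt_le; auto. apply fm_ex; lra.
    apply exRI_cont. intros. apply exd_cont. auto_derive. auto.
    intros t Ht. unfold fm. eapply Rle_trans. 2: apply HB; lra.
    apply Rmult_le_compat_r. apply Rlt_le, exp_pos. apply Rpower_le_exp; lra.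
  - rewrite (is_RInt_unique _ 1 y (minus (- 2 * K * exp (- (y / 2))) (- 2 * K * exp (- (1 / 2))))).
    + assert (exp (- (1 / 2)) <= 1). { rewrite <- exp_0 at 2. apply exp_mono. lra. }
      pose proof (exp_pos (- (y / 2))). pose proof (exp_pos (- (1 / 2))).
      unfold minus, plus, opp; simpl. nra.
    + apply (is_RInt_derive (V:=R_CompleteNormedModule) (fun t => - 2 * K * exp (- (t / 2)))).
      * intros. auto_derive; auto. unfold Rdiv. field.
      * intros. apply exd_cont. auto_derive. auto.
Qed.

Lemma Pm_lower m : 0 < m -> forall y, 0 < y -> y <= 1 -> - / m <= Pm m y.
Proof.
  intros Hm y Hy Hy1. unfold Pm.
  rewrite <- (opp_RInt_swap (V:=R_CompleteNormedModule)). 2: apply fm_ex; lra.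
  assert (RInt (fm m) y 1 <= / m); [|unfold opp; simpl; lra].
  apply Rle_trans with (RInt (fun t => Rpower t (m - 1)) y 1).
  - apply RInt_le; auto. apply fm_ex; lra.
    apply exRI_cont. intros z Hz. apply Rpower_cont.
    assert (0 < Rmin y 1) by (apply Rmin_glb_lt; lra). lra.
    intros t Ht. unfold fm. pose proof (Rpower_pos' t (m - 1)).
    assert (exp (- t) <= 1). { rewrite <- exp_0. apply exp_mono. lra. } nra.
  - rewrite (is_RInt_unique _ y 1 (minus (Rpower 1 m / m) (Rpower y m / m))).
    + assert (E1 : Rpower 1 m = 1) by (unfold Rpower; rewrite ln_1, Rmult_0_r; apply exp_0).
      rewrite E1. pose proof (Rpower_pos' y m). unfold minus, plus, opp; simpl.
      assert (0 < / m) by (apply Rinv_0_lt_compat; auto). unfold Rdiv.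
      assert (0 <= Rpower y m * / m) by (apply Rmult_le_pos; lra). lra.
    + apply (is_RInt_derive (V:=R_CompleteNormedModule) (fun t => Rpower t m / m)).
      * intros t Ht. assert (0 < t). { assert (0 < Rmin y 1) by (apply Rmin_glb_lt; lra). lra. }
        apply is_derive_eq with (/ m * (m * Rpower t (m - 1))).
        apply is_derive_extR with (fun x => / m * Rpower x m). intros; unfold Rdiv; ring.
        apply is_derive_scal. apply Rpower_derive; auto. rewrite <- Rmult_assoc, Rinv_l, Rmult_1_l. reflexivity. lra.
      * intros t Ht. apply Rpower_cont.
        assert (0 < Rmin y 1) by (apply Rmin_glb_lt; lra). lra.
Qed.

Definition Lim0 (P : R -> R) (L : R) : Prop :=
  forall eps, 0 < eps -> exists d, 0 < d /\ forall x, 0 < x -> x <= d -> Rabs (P x - L) < eps.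

Lemma mono_limP (P : R -> R) B : (forall x y, 1 <= x -> x <= y -> P x <= P y) ->
  (forall x, 1 <= x -> P x <= B) -> exists L, LimP P L /\ forall x, 1 <= x -> P x <= L.
Proof.
  intros Hm HB.
  set (E := fun z => exists x, 1 <= x /\ z = P x).
  assert (Hb : bound E). { exists B. intros z [x [Hx ->]]. auto. }
  assert (He : exists z, E z). { exists (P 1). exists 1. split; auto; lra. }
  destruct (completeness E Hb He) as [L [HL1 HL2]].
  exists L. split.
  - intros eps Heps.
    destruct (Classical_Prop.classic (exists x, 1 <= x /\ L - eps < P x)) as [[x0 [Hx0 Hlt]]|Hn].
    + exists x0. intros x Hx. assert (P x <= L) by (apply HL1; exists x; split; lra).
      assert (P x0 <= P x) by (apply Hm; lra). apply Rabs_def1; lra.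
    + exfalso. assert (L <= L - eps); [|lra]. apply HL2. intros z [x [Hx ->]].
      apply Rnot_lt_le. intro. apply Hn. exists x; split; auto.
  - intros x Hx. apply HL1. exists x; split; auto.
Qed.

Lemma mono_lim0 (P : R -> R) B : (forall x y, 0 < x -> x <= y -> y <= 1 -> P x <= P y) ->
  (forall x, 0 < x -> x <= 1 -> B <= P x) -> exists L, Lim0 P L /\ forall x, 0 < x -> x <= 1 -> L <= P x.
Proof.
  intros Hm HB.
  set (E := fun z => exists x, 0 < x /\ x <= 1 /\ z = - P x).
  assert (Hb : bound E). { exists (- B). intros z [x [Hx [Hx1 ->]]]. specialize (HB x Hx Hx1). lra. }
  assert (He : exists z, E z). { exists (- P 1). exists 1. repeat split; lra. }
  destruct (completeness E Hb He) as [L [HL1 HL2]].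
  exists (- L). split.
  - intros eps Heps.
    destruct (Classical_Prop.classic (exists x, 0 < x /\ x <= 1 /\ L - eps < - P x)) as [[x0 [Hx0 [Hx01 Hlt]]]|Hn].
    + exists x0. split; auto. intros x Hx Hxd. assert (- P x <= L) by (apply HL1; exists x; repeat split; lra).
      assert (P x <= P x0) by (apply Hm; lra). apply Rabs_def1; lra.
    + exfalso. assert (L <= L - eps); [|lra]. apply HL2. intros z [x [Hx [Hx1 ->]]].
      apply Rnot_lt_le. intro. apply Hn. exists x; repeat split; auto.
  - intros x Hx Hx1. assert (- P x <= L) by (apply HL1; exists x; repeat split; lra). lra.
Qed.

Lemma Pm_limits m : 0 < m -> exists L1 L0, LimP (Pm m) L1 /\ Lim0 (Pm m) L0 /\ 0 < L1 - L0.
Proof.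
  intros Hm.
  destruct (Pm_upper m) as [B HB].
  destruct (mono_limP (Pm m) B) as [L1 [H1 H1b]]; auto.
  { intros; apply Pm_mono; lra. }
  destruct (mono_lim0 (Pm m) (- / m)) as [L0 [H0 H0b]].
  { intros; apply Pm_mono; lra. }
  { intros; apply Pm_lower; auto. }
  exists L1, L0. repeat split; auto.
  assert (L0 <= 0) by (rewrite <- (Pm_1 m); apply H0b; lra).
  assert (0 < Pm m 2).
  { pose proof (Pm_prim m 1 2 ltac:(lra) ltac:(lra)). rewrite Pm_1, Rminus_0_r in H2.
    rewrite <- (is_RInt_unique _ _ _ _ H2). apply RInt_gt_0. lra. intros; apply fm_pos.
    intros. apply fm_cont. lra. }
  specialize (H1b 2 ltac:(lra)). lra.
Qed.

Definition PLpos (f : R -> R) (l : R) : Prop :=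
  exists P L1 L0, PrimPos f P /\ LimP P L1 /\ Lim0 P L0 /\ l = L1 - L0.

Lemma PLpos_imp f l : PLpos f l -> ImpInt_pos f l.
Proof.
  intros (P & L1 & L0 & HP & H1 & H0 & ->) eps He.
  destruct (H1 (eps/2) ltac:(lra)) as [M1 HM1].
  destruct (H0 (eps/2) ltac:(lra)) as [d [Hd HM0]].
  exists d, (Rmax 1 M1). split; auto. split. { eapply Rlt_le_trans. 2: apply Rmax_l. lra. }
  intros a b Ha Had Hb.
  assert (Hb0 : 0 < b) by (eapply Rlt_le_trans; [|exact Hb]; eapply Rlt_le_trans; [|apply Rmax_l]; lra).
  assert (Hi : ex_RInt f a b) by (exists (P b - P a); apply HP; auto).
  exists (ex_RInt_Reals_0 _ _ _ Hi).
  rewrite <- RInt_Reals. rewrite (is_RInt_unique _ _ _ _ (HP a b Ha Hb0)).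
  assert (M1 <= b) by (eapply Rle_trans; [apply Rmax_r|exact Hb]).
  specialize (HM1 b H). specialize (HM0 a Ha Had).
  replace (P b - P a - (L1 - L0)) with ((P b - L1) - (P a - L0)) by ring.
  eapply Rle_lt_trans. apply Rabs_triang. rewrite Rabs_Ropp. lra.
Qed.

Lemma Lim0_plus P Q L1 L2 : Lim0 P L1 -> Lim0 Q L2 -> Lim0 (fun x => P x + Q x) (L1 + L2).
Proof.
  intros HP HQ eps He. destruct (HP (eps/2) ltac:(lra)) as [d1 [Hd1 H1]].
  destruct (HQ (eps/2) ltac:(lra)) as [d2 [Hd2 H2]].
  exists (Rmin d1 d2). split. apply Rmin_glb_lt; auto. intros x Hx Hxd.
  pose proof (H1 x Hx (Rle_trans _ _ _ Hxd (Rmin_l _ _))).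
  pose proof (H2 x Hx (Rle_trans _ _ _ Hxd (Rmin_r _ _))).
  replace (P x + Q x - (L1 + L2)) with ((P x - L1) + (Q x - L2)) by ring.
  eapply Rle_lt_trans. apply Rabs_triang. lra.
Qed.

Lemma Lim0_scal P L c : Lim0 P L -> Lim0 (fun x => c * P x) (c * L).
Proof.
  intros HP eps He. destruct (HP (eps / (Rabs c + 1))) as [d [Hd HM]].
  { apply Rdiv_lt_0_compat. lra. pose proof (Rabs_pos c); lra. }
  exists d. split; auto. intros x Hx Hxd. specialize (HM x Hx Hxd).
  replace (c * P x - c * L) with (c * (P x - L)) by ring. rewrite Rabs_mult.
  pose proof (Rabs_pos c). pose proof (Rabs_pos (P x - L)).
  apply Rle_lt_trans with ((Rabs c + 1) * Rabs (P x - L)). nra.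
  replace eps with ((Rabs c + 1) * (eps / (Rabs c + 1))) by (field; lra).
  apply Rmult_lt_compat_l. lra. auto.
Qed.

Lemma PLpos_plus f g l1 l2 : PLpos f l1 -> PLpos g l2 -> PLpos (fun x => f x + g x) (l1 + l2).
Proof.
  intros (P & L1 & L2 & HP & H1 & H2 & ->) (Q & K1 & K2 & HQ & G1 & G2 & ->).
  exists (fun x => P x + Q x), (L1 + K1), (L2 + K2). repeat split.
  - intros a b Ha Hb. replace (P b + Q b - (P a + Q a)) with (plus (P b - P a) (Q b - Q a)).
    2:{ unfold plus; simpl. ring. }
    apply (is_RInt_plus (V:=R_NormedModule) f g). apply HP; auto. apply HQ; auto.
  - apply LimP_plus; auto.
  - apply Lim0_plus; auto.
  - ring.
Qed.

Lemma PLpos_scal f l c : PLpos f l -> PLpos (fun x => c * f x) (c * l).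
Proof.
  intros (P & L1 & L2 & HP & H1 & H2 & ->).
  exists (fun x => c * P x), (c * L1), (c * L2). repeat split.
  - intros a b Ha Hb. replace (c * P b - c * P a) with (scal c (P b - P a)).
    2:{ unfold scal; simpl; unfold mult; simpl. ring. }
    apply (is_RInt_scal (V:=R_NormedModule) f). apply HP; auto.
  - apply LimP_scal; auto.
  - apply Lim0_scal; auto.
  - ring.
Qed.

Lemma PLpos_ext f g l : (forall x, 0 < x -> f x = g x) -> PLpos f l -> PLpos g l.
Proof.
  intros E (P & L1 & L2 & HP & H1 & H2 & ->).
  exists P, L1, L2. repeat split; auto.
  intros a b Ha Hb. apply (is_RInt_ext (V:=R_NormedModule) f). 2: apply HP; auto.
  intros x Hx. apply E. assert (0 < Rmin a b) by (apply Rmin_glb_lt; auto). lra.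
Qed.

Lemma PLpos_eq f l l' : l = l' -> PLpos f l -> PLpos f l'.
Proof. intros ->; auto. Qed.

Lemma PrimPos_deriv f P : (forall x, 0 < x -> is_derive P x (f x)) -> (forall x, 0 < x -> continuous f x) -> PrimPos f P.
Proof.
  intros Hd Hc a b Ha Hb. apply (is_RInt_derive (V:=R_CompleteNormedModule) P f).
  intros; apply Hd. assert (0 < Rmin a b) by (apply Rmin_glb_lt; auto). lra.
  intros; apply Hc. assert (0 < Rmin a b) by (apply Rmin_glb_lt; auto). lra.
Qed.

Lemma LimP_sq P L k : 0 < k -> LimP P L -> LimP (fun x => P (k * x ^ 2)) L.
Proof.
  intros Hk HP. apply (LimP_comp P (fun x => k * x ^ 2)); auto.
  intros M. exists (Rmax 1 (M / k)). intros x Hx.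
  assert (1 <= x) by (eapply Rle_trans; [apply Rmax_l|exact Hx]).
  assert (M / k <= x) by (eapply Rle_trans; [apply Rmax_r|exact Hx]).
  apply Rmult_le_compat_l with (r := k) in H0; [|lra].
  replace (k * (M / k)) with M in H0 by (field; lra).
  assert (0 <= k * x * (x - 1)) by (apply Rmult_le_pos; [apply Rmult_le_pos|]; lra).
  assert (k * x <= k * x ^ 2) by (simpl; nra). lra.
Qed.

Lemma Lim0_sq P L k : 0 < k -> Lim0 P L -> Lim0 (fun x => P (k * x ^ 2)) L.
Proof.
  intros Hk HP eps He. destruct (HP eps He) as [d [Hd H]].
  exists (Rmin 1 (d / k)). split. apply Rmin_glb_lt. lra. apply Rdiv_lt_0_compat; auto.
  intros x Hx Hxd. apply H. apply Rmult_lt_0_compat; auto. apply pow_lt; auto.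
  assert (x <= 1) by (eapply Rle_trans; [exact Hxd|apply Rmin_l]).
  assert (x <= d / k) by (eapply Rle_trans; [exact Hxd|apply Rmin_r]).
  apply Rmult_le_compat_l with (r := k) in H1; [|lra].
  replace (k * (d / k)) with d in H1 by (field; lra).
  assert (0 <= k * x * (1 - x)) by (apply Rmult_le_pos; [apply Rmult_le_pos|]; lra).
  assert (k * x ^ 2 <= k * x) by (simpl; nra). lra.
Qed.

Lemma Lim0_ext P Q L : (forall x, 0 < x -> P x = Q x) -> Lim0 P L -> Lim0 Q L.
Proof. intros E HP eps He. destruct (HP eps He) as [d [Hd H]]. exists d. split; auto. intros. rewrite <- E; auto. Qed.

Lemma powexp_limP m : LimP (fun t => Rpower t m * exp (- t)) 0.
Proof.
  destruct (Rpower_exp_bound m) as [K [HK HB]].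
  apply LimP_inv_bound with (2 * K). lra.
  intros x Hx. rewrite Rabs_right. 2: { apply Rle_ge, Rlt_le, Rmult_lt_0_compat. apply Rpower_pos'. apply exp_pos. }
  eapply Rle_trans. apply HB; auto.
  pose proof (exp_neg_bound (x / 2) ltac:(lra)).
  apply Rle_trans with (K * / (1 + x / 2)). apply Rmult_le_compat_l; lra.
  unfold Rdiv. apply Rmult_le_reg_r with (x * (1 + x / 2)). nra.
  replace (K * / (1 + x * / 2) * (x * (1 + x / 2))) with (K * x) by (field; lra).
  replace (2 * K * / x * (x * (1 + x / 2))) with (2 * K * (1 + x / 2)) by (field; lra). nra.
Qed.

Lemma Rpower_base_le a b m : 0 < a -> a <= b -> 0 <= m -> Rpower a m <= Rpower b m.
Proof. intros. unfold Rpower. apply exp_mono. apply Rmult_le_compat_l; auto. apply ln_le; auto. Qed.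

Lemma powexp_lim0 m : 0 < m -> Lim0 (fun t => Rpower t m * exp (- t)) 0.
Proof.
  intros Hm eps He. exists (Rpower (eps / 2) (/ m)). split. apply Rpower_pos'.
  intros x Hx Hxd. rewrite Rminus_0_r.
  rewrite Rabs_right. 2: { apply Rle_ge, Rlt_le, Rmult_lt_0_compat. apply Rpower_pos'. apply exp_pos. }
  assert (exp (- x) <= 1) by (rewrite <- exp_0; apply exp_mono; lra).
  assert (Rpower x m <= eps / 2).
  { eapply Rle_trans. apply Rpower_base_le; eauto. lra.
    rewrite Rpower_mult. replace (/ m * m) with 1 by (field; lra). rewrite Rpower_1; lra. }
  pose proof (Rpower_pos' x m). nra.
Qed.

Lemma Rpower_def x y : Rpower x y = exp (y * ln x).
Proof. reflexivity. Qed.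

Lemma naka_cont m Gm c x : 0 < x -> continuous (fun x => nakagami_pdf m Gm x * exp (c * x ^ 2)) x.
Proof.
  intros Hx. unfold nakagami_pdf.
  apply exd_cont.
  apply (ex_derive_mult (fun x => 2 * Rpower m m / Gm * Rpower x (2 * m - 1) * exp (- m * x ^ 2))
     (fun x => exp (c * x ^ 2))).
  2: auto_derive; auto.
  apply (ex_derive_mult (fun x => 2 * Rpower m m / Gm * Rpower x (2 * m - 1))
     (fun x => exp (- m * x ^ 2))).
  2: auto_derive; auto.
  apply (ex_derive_scal (fun x => Rpower x (2 * m - 1))). eexists. apply Rpower_derive; auto.
Qed.

Lemma ln_sq_mult k x : 0 < k -> 0 < x -> ln (k * x ^ 2) = ln k + 2 * ln x.
Proof.
  intros. rewrite ln_mult; [| auto | apply pow_lt; auto]. rewrite ln_pow by auto. simpl INR. ring.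
Qed.

Lemma naka_identity m Gm c x : 0 < m -> 0 < Gm -> c <= 0 -> 0 < x ->
  Rpower m m / (Gm * Rpower (m - c) m) * ((m - c) * (2 * x) * fm m ((m - c) * x ^ 2))
  = nakagami_pdf m Gm x * exp (c * x ^ 2).
Proof.
  intros Hm HG Hc Hx. set (k := m - c). assert (Hk : 0 < k) by (unfold k; lra).
  unfold fm, nakagami_pdf. rewrite !Rpower_def. rewrite ln_sq_mult by auto.
  set (lk := ln k). set (lx := ln x). set (lm := ln m).
  assert (Ekx : k * (2 * x) = 2 * exp (lk + lx)).
  { rewrite exp_plus. unfold lk, lx. rewrite !exp_ln; auto. ring. }
  rewrite Ekx.
  assert (E1 : exp (- (k * x ^ 2)) = exp (- m * x ^ 2) * exp (c * x ^ 2)).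
  { rewrite <- exp_plus. f_equal. unfold k. ring. }
  rewrite E1.
  assert (Ec : exp (lk + lx) * exp ((m - 1) * (lk + 2 * lx)) = exp (m * lk) * exp ((2 * m - 1) * lx)).
  { rewrite <- !exp_plus. f_equal. ring. }
  transitivity (exp (m * lm) / (Gm * exp (m * lk)) * 2 * (exp (lk + lx) * exp ((m - 1) * (lk + 2 * lx)))
     * exp (- m * x ^ 2) * exp (c * x ^ 2)).
  { ring. }
  rewrite Ec. field; repeat split; try (apply Rgt_not_eq; apply exp_pos); lra.
Qed.

Lemma naka_mgf m Gm L1 L0 c : 0 < m -> LimP (Pm m) L1 -> Lim0 (Pm m) L0 -> Gm = L1 - L0 -> 0 < Gm -> c <= 0 ->
  PLpos (fun x => nakagami_pdf m Gm x * exp (c * x ^ 2)) (Rpower (1 - / m * c) (- m)).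
Proof.
  intros Hm H1 H0 HG HGp Hc.
  set (k := m - c). assert (Hk : 0 < k) by (unfold k; lra).
  set (K := Rpower m m / (Gm * Rpower k m)).
  exists (fun x => K * Pm m (k * x ^ 2)), (K * L1), (K * L0). repeat split.
  - apply PrimPos_deriv.
    + intros x Hx. rewrite <- naka_identity by auto. fold k. fold K.
      apply is_derive_scal.
      apply is_derive_eq with (scal (k * (2 * x)) (fm m (k * x ^ 2))).
      apply (is_derive_comp (K:=R_AbsRing) (V:=R_NormedModule) (Pm m) (fun x => k * x ^ 2)).
      apply Pm_derive. apply Rmult_lt_0_compat; auto. apply pow_lt; auto.
      auto_derive; auto. ring.
      unfold scal; simpl; unfold mult; simpl. reflexivity.
    + intros x Hx. apply naka_cont; auto.
  - apply LimP_scal. apply LimP_sq; auto.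
  - apply Lim0_scal. apply Lim0_sq; auto.
  - replace (K * L1 - K * L0) with (K * Gm) by (rewrite HG; ring).
    unfold K. rewrite !Rpower_def.
    replace (1 - / m * c) with (k / m) by (unfold k; field; lra).
    rewrite ln_div by auto.
    replace (- m * (ln k - ln m)) with (m * ln m + - (m * ln k)) by ring.
    rewrite exp_plus, exp_Ropp. field; repeat split; try (apply Rgt_not_eq; apply exp_pos); lra.
Qed.

Definition Rf (m t : R) : R := m * Pm m t - Rpower t m * exp (- t).

Lemma Rf_derive m t : 0 < t -> is_derive (Rf m) t (Rpower t m * exp (- t)).
Proof.
  intros Ht. unfold Rf.
  apply is_derive_eq with (plus (m * fm m t) (opp (m * Rpower t (m - 1) * exp (- t) + Rpower t m * - exp (- t)))).
  - apply (is_derive_minus (K:=R_AbsRing) (V:=R_NormedModule) (fun t => m * Pm m t) (fun t => Rpower t m * exp (- t))).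
    + apply is_derive_scal. apply Pm_derive; auto.
    + apply (is_derive_mult (K:=R_AbsRing) (fun x => Rpower x m) (fun x => exp (- x))).
      apply Rpower_derive; auto. auto_derive; auto. ring. intros; apply Rmult_comm.
  - unfold plus, opp; simpl. unfold fm. ring.
Qed.

Lemma naka_identity2 m Gm x : 0 < m -> 0 < Gm -> 0 < x ->
  / (m * Gm) * (m * (2 * x) * (Rpower (m * x ^ 2) m * exp (- (m * x ^ 2))))
  = nakagami_pdf m Gm x * x ^ 2.
Proof.
  intros Hm HG Hx. unfold nakagami_pdf. rewrite !Rpower_def. rewrite ln_sq_mult by auto.
  set (lx := ln x). set (lm := ln m).
  assert (Ex : exp ((2 * m - 1) * lx) * x = exp (2 * m * lx)).
  { replace x with (exp lx) by (unfold lx; apply exp_ln; auto). rewrite <- exp_plus. f_equal. ring. }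
  transitivity (2 / Gm * exp (m * lm) * exp (2 * m * lx) * exp (- m * x ^ 2) * x).
  { replace (m * (lm + 2 * lx)) with (m * lm + 2 * m * lx) by ring. rewrite exp_plus.
    replace (- (m * x ^ 2)) with (- m * x ^ 2) by ring. field. lra. }
  rewrite <- Ex. simpl. field. lra.
Qed.

Lemma naka_m2 m Gm L1 L0 : 0 < m -> LimP (Pm m) L1 -> Lim0 (Pm m) L0 -> Gm = L1 - L0 -> 0 < Gm ->
  PLpos (fun x => nakagami_pdf m Gm x * x ^ 2) 1.
Proof.
  intros Hm H1 H0 HG HGp.
  exists (fun x => / (m * Gm) * Rf m (m * x ^ 2)), (/ (m * Gm) * (m * L1 + -1 * 0)), (/ (m * Gm) * (m * L0 + -1 * 0)).
  refine (conj _ (conj _ (conj _ _))).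
  - apply PrimPos_deriv.
    + intros x Hx. rewrite <- naka_identity2 by auto.
      apply is_derive_scal.
      apply is_derive_eq with (scal (m * (2 * x)) (Rpower (m * x ^ 2) m * exp (- (m * x ^ 2)))).
      apply (is_derive_comp (K:=R_AbsRing) (V:=R_NormedModule) (Rf m) (fun x => m * x ^ 2)).
      apply Rf_derive. apply Rmult_lt_0_compat; auto. apply pow_lt; auto.
      auto_derive; auto. ring.
      unfold scal; simpl; unfold mult; simpl. reflexivity.
    + intros x Hx. apply exd_cont. unfold nakagami_pdf.
      apply (ex_derive_mult (fun x => 2 * Rpower m m / Gm * Rpower x (2 * m - 1) * exp (- m * x ^ 2))
         (fun x => x ^ 2)).
      2: auto_derive; auto.
      apply (ex_derive_mult (fun x => 2 * Rpower m m / Gm * Rpower x (2 * m - 1))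
         (fun x => exp (- m * x ^ 2))).
      2: auto_derive; auto.
      apply (ex_derive_scal (fun x => Rpower x (2 * m - 1))). eexists. apply Rpower_derive; auto.
  - apply LimP_scal. apply (LimP_sq (Rf m) _ m); [auto|]. unfold Rf.
    apply LimP_ext with (fun t => m * Pm m t + -1 * (Rpower t m * exp (- t))). intros; ring.
    apply (LimP_plus (fun t => m * Pm m t) (fun t => -1 * (Rpower t m * exp (- t)))).
    apply LimP_scal; auto. apply LimP_scal. apply powexp_limP.
  - apply Lim0_scal. apply (Lim0_sq (Rf m) _ m); [auto|]. unfold Rf.
    apply Lim0_ext with (fun t => m * Pm m t + -1 * (Rpower t m * exp (- t))). intros; ring.
    apply (Lim0_plus (fun t => m * Pm m t) (fun t => -1 * (Rpower t m * exp (- t)))).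
    apply Lim0_scal; auto. apply Lim0_scal. apply powexp_lim0; auto.
  - rewrite HG. field. lra.
Qed.

Lemma sumR_front n f : sumR (S n) f = f O + sumR n (fun j => f (S j)).
Proof.
  revert f. induction n; intros f. simpl. ring.
  change (sumR (S (S n)) f) with (sumR (S n) f + f (S n)).
  rewrite IHn. simpl. ring.
Qed.

Lemma sumR_ext n f g : (forall i, (i < n)%nat -> f i = g i) -> sumR n f = sumR n g.
Proof.
  induction n; intros H; simpl. auto. rewrite IHn. rewrite H. auto. lia. intros; apply H; lia.
Qed.

Lemma sumR_plus n f g : sumR n (fun i => f i + g i) = sumR n f + sumR n g.
Proof. induction n; simpl. ring. rewrite IHn. ring. Qed.

Lemma sumR_scal n c f : sumR n (fun i => c * f i) = c * sumR n f.
Proof. induction n; simpl. ring. rewrite IHn. ring. Qed.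

Lemma sumR_const n c : sumR n (fun _ => c) = INR n * c.
Proof. induction n. simpl. ring. rewrite S_INR. simpl. rewrite IHn. ring. Qed.

Lemma sumR_split n k f : sumR (n + k) f = sumR n f + sumR k (fun i => f (n + i)%nat).
Proof.
  induction k. rewrite Nat.add_0_r. simpl. ring.
  rewrite Nat.add_succ_r. simpl. rewrite IHk. ring.
Qed.

Lemma sumR_nonneg n f : (forall i, 0 <= f i) -> 0 <= sumR n f.
Proof. intros H. induction n; simpl. lra. pose proof (H n). lra. Qed.

Lemma IterInt_ext n w F G l : (forall v, F v = G v) -> IterInt n w F l -> IterInt n w G l.
Proof.
  intros E H. replace G with F; auto. apply functional_extensionality; auto.
Qed.

Lemma iter_exp : forall n (w h : nat -> R -> R) (e : nat -> R) K,
  (forall j, (j < n)%nat -> PL (fun x => w j x * exp (h j x)) (exp (e j))) ->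
  IterInt n w (fun v => K * exp (sumR n (fun j => h j (v j)))) (K * exp (sumR n e)).
Proof.
  induction n; intros w h e K Hj.
  - simpl. reflexivity.
  - cbn [IterInt].
    exists (fun x => K * exp (h O x) * exp (sumR n (fun j => e (S j)))). split.
    + intros x.
      apply IterInt_ext with (fun v => (K * exp (h O x)) * exp (sumR n (fun j => h (S j) (v j)))).
      { intros v. cbv beta. rewrite sumR_front. simpl vcons. rewrite exp_plus. ring. }
      apply (IHn (fun i => w (S i)) (fun j => h (S j)) (fun j => e (S j))).
      intros j Hjn. apply Hj. lia.
    + apply PL_imp.
      pose proof (PL_scal _ _ (K * exp (sumR n (fun j => e (S j)))) (Hj O ltac:(lia))) as H.
      eapply PL_eq. 2: eapply PL_ext. 3: exact H.
      * rewrite sumR_front, exp_plus. ring.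
      * intros x. simpl. ring.
Qed.

Lemma iter_sum : forall n (w h : nat -> R -> R) (d : nat -> R) K,
  (forall j, (j < n)%nat -> PL (w j) 1 /\ PL (fun x => w j x * h j x) (d j)) ->
  IterInt n w (fun v => K + sumR n (fun j => h j (v j))) (K + sumR n d).
Proof.
  induction n; intros w h d K Hj.
  - simpl. reflexivity.
  - cbn [IterInt].
    exists (fun x => (K + h O x) + sumR n (fun j => d (S j))). split.
    + intros x.
      apply IterInt_ext with (fun v => (K + h O x) + sumR n (fun j => h (S j) (v j))).
      { intros v. cbv beta. rewrite sumR_front. simpl vcons. ring. }
      apply (IHn (fun i => w (S i)) (fun j => h (S j)) (fun j => d (S j))).
      intros j Hjn. apply Hj. lia.
    + apply PL_imp. destruct (Hj O ltac:(lia)) as [H1 H2].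
      pose proof (PL_plus _ _ _ _ (PL_scal _ _ (K + sumR n (fun j => d (S j))) H1) H2) as H.
      eapply PL_eq. 2: eapply PL_ext. 3: exact H.
      * rewrite sumR_front. ring.
      * intros x. simpl. ring.
Qed.

Lemma final_eq (mu : nat) sx sy m gbar P Q s : (0 < mu)%nat -> 0 < sx -> 0 < sy -> 0 < m -> 0 < gbar ->
  0 <= P -> 0 < Q -> s <= 0 ->
  let EW := INR mu * (sx ^ 2 + sy ^ 2) + (P + Q) in
  let t := s * gbar / EW in
  let Dx := 1 - 2 * t * sx ^ 2 in
  let Dy := 1 - 2 * t * sy ^ 2 in
  exp (INR mu * (- / 2 * ln Dx) + INR mu * (- / 2 * ln Dy)) *
    Rpower (1 - / m * (t / Dx * P + t / Dy * Q)) (- m) =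
  FB_MGF gbar ((P + Q) / (INR mu * (sx ^ 2 + sy ^ 2))) mu m (sx ^ 2 / sy ^ 2) (sqrt (P / Q)) s.
Proof.
  intros Hmu Hsx Hsy Hm Hg HP HQ Hs EW t Dx Dy.
  assert (Hmu' : 0 < INR mu) by (apply lt_0_INR; auto).
  assert (HEW : 0 < EW). { unfold EW. assert (0 < INR mu * (sx ^ 2 + sy ^ 2)) by (apply Rmult_lt_0_compat; [auto|nra]). lra. }
  assert (Ht : t <= 0). { unfold t, Rdiv. assert (0 < / EW) by (apply Rinv_0_lt_compat; auto). assert (s * gbar <= 0) by nra. nra. }
  assert (HDx : 0 < Dx) by (unfold Dx; nra).
  assert (HDy : 0 < Dy) by (unfold Dy; nra).
  unfold FB_MGF. cbv zeta.
  rewrite pow2_sqrt by (apply Rmult_le_pos; [auto | left; apply Rinv_0_lt_compat; auto]).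
  assert (Hs2 : 0 < sx ^ 2 + sy ^ 2) by nra.
  assert (A1 : 1 - 2 * (sx ^ 2 / sy ^ 2) * gbar * s / (INR mu * (1 + sx ^ 2 / sy ^ 2) * (1 + (P + Q) / (INR mu * (sx ^ 2 + sy ^ 2)))) = Dx).
  { unfold Dx, t, EW. field. repeat split; try lra. fold EW; lra. }
  assert (A2 : 1 - 2 * gbar * s / (INR mu * (1 + sx ^ 2 / sy ^ 2) * (1 + (P + Q) / (INR mu * (sx ^ 2 + sy ^ 2)))) = Dy).
  { unfold Dy, t, EW. field. repeat split; try lra. fold EW; lra. }
  rewrite A1, A2.
  assert (B1 : (1 + sx ^ 2 / sy ^ 2) * (1 + (P + Q) / (INR mu * (sx ^ 2 + sy ^ 2))) * INR mu = EW / sy ^ 2).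
  { unfold EW. field. repeat split; lra. }
  assert (B2 : EW / sy ^ 2 - 2 * (sx ^ 2 / sy ^ 2) * gbar * s = EW * Dx / sy ^ 2).
  { unfold Dx, t. field. split; lra. }
  assert (B3 : EW / sy ^ 2 - 2 * gbar * s = EW * Dy / sy ^ 2).
  { unfold Dy, t. field. split; lra. }
  match goal with |- _ = _ * Rpower ?Y _ => replace Y with (1 - / m * (t / Dx * P + t / Dy * Q)) end.
  2:{ rewrite B1, B2, B3. f_equal. f_equal. unfold t. field. repeat split; lra. }
  f_equal. unfold Rpower. rewrite <- exp_plus, <- exp_Ropp. f_equal. field.
Qed.

Definition sig (mu : nat) (sx sy : R) (j : nat) : R := if Nat.ltb j mu then sx else sy.
Definition aco (mu : nat) (p q : nat -> R) (j : nat) : R := if Nat.ltb j mu then p j else q (j - mu)%nat.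

Lemma weights_eq mu sx sy j : FB_weights mu sx sy j = gauss_pdf (sig mu sx sy j).
Proof. unfold FB_weights, sig. destruct (Nat.ltb j mu); reflexivity. Qed.

Lemma sig_pos mu sx sy j : 0 < sx -> 0 < sy -> 0 < sig mu sx sy j.
Proof. unfold sig. destruct (Nat.ltb j mu); auto. Qed.

Lemma split2 mu (f : nat -> R) : sumR (2 * mu) f = sumR mu f + sumR mu (fun i => f (mu + i)%nat).
Proof. replace (2 * mu)%nat with (mu + mu)%nat by lia. apply sumR_split. Qed.

Lemma ltb_lo mu i : (i < mu)%nat -> Nat.ltb i mu = true.
Proof. intros. apply Nat.ltb_lt; auto. Qed.

Lemma ltb_hi mu i : Nat.ltb (mu + i) mu = false.
Proof. apply Nat.ltb_nlt. lia. Qed.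

Lemma W_eq mu p q xi v : FB_W mu p q xi v = sumR (2 * mu) (fun j => (v j + aco mu p q j * xi) ^ 2).
Proof.
  unfold FB_W. rewrite split2, sumR_plus. f_equal.
  - apply sumR_ext. intros i Hi. unfold aco. rewrite ltb_lo; auto.
  - apply sumR_ext. intros i Hi. unfold aco. rewrite ltb_hi. replace (mu + i - mu)%nat with i by lia. auto.
Qed.

Lemma mean_sum mu sx sy p q x :
  sumR (2 * mu) (fun j => sig mu sx sy j ^ 2 + (aco mu p q j * x) ^ 2) =
  INR mu * (sx ^ 2 + sy ^ 2) + (FB_p2 mu p + FB_p2 mu q) * x ^ 2.
Proof.
  rewrite split2. unfold FB_p2.
  rewrite (sumR_ext mu _ (fun i => sx ^ 2 + x ^ 2 * p i ^ 2)).
  2:{ intros i Hi. unfold sig, aco. rewrite ltb_lo; auto. ring. }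
  cbv beta.
  rewrite (sumR_ext mu (fun i => sig mu sx sy (mu + i) ^ 2 + (aco mu p q (mu + i) * x) ^ 2) (fun i => sy ^ 2 + x ^ 2 * q i ^ 2)).
  2:{ intros i Hi. unfold sig, aco. rewrite ltb_hi. replace (mu + i - mu)%nat with i by lia. ring. }
  rewrite !sumR_plus, !sumR_const, !sumR_scal. ring.
Qed.

Lemma mgf_sum mu sx sy p q t x :
  sumR (2 * mu) (fun j => gexpo (sig mu sx sy j) t (aco mu p q j * x)) =
  INR mu * (- / 2 * ln (1 - 2 * t * sx ^ 2)) + INR mu * (- / 2 * ln (1 - 2 * t * sy ^ 2)) +
  (t / (1 - 2 * t * sx ^ 2) * FB_p2 mu p + t / (1 - 2 * t * sy ^ 2) * FB_p2 mu q) * x ^ 2.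
Proof.
  rewrite split2. unfold FB_p2.
  rewrite (sumR_ext mu _ (fun i => - / 2 * ln (1 - 2 * t * sx ^ 2) + (t / (1 - 2 * t * sx ^ 2) * x ^ 2) * p i ^ 2)).
  2:{ intros i Hi. unfold gexpo, sig, aco. rewrite ltb_lo; auto. unfold Rdiv. ring. }
  cbv beta.
  rewrite (sumR_ext mu (fun i => gexpo (sig mu sx sy (mu + i)) t (aco mu p q (mu + i) * x)) (fun i => - / 2 * ln (1 - 2 * t * sy ^ 2) + (t / (1 - 2 * t * sy ^ 2) * x ^ 2) * q i ^ 2)).
  2:{ intros i Hi. unfold sig, aco. rewrite ltb_hi. replace (mu + i - mu)%nat with i by lia. unfold gexpo, Rdiv. ring. }
  rewrite !sumR_plus, !sumR_const, !sumR_scal. ring.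
Qed.

Theorem lemma1 (mu : nat) (sx sy m gbar : R) (p q : nat -> R) (s : R)
  (Hmu : (0 < mu)%nat) (Hsx : 0 < sx) (Hsy : 0 < sy) (Hm : 0 < m)
  (Hg : 0 < gbar) (Hq : 0 < FB_p2 mu q) (Hs : s <= 0) :
  exists Gm, is_Gamma m Gm /\
  exists EW, FB_Expect mu sx sy m Gm (FB_W mu p q) EW /\
    FB_Expect mu sx sy m Gm
      (fun xi v => exp (s * (gbar * FB_W mu p q xi v / EW)))
      (FB_MGF gbar (FB_kappa mu sx sy p q) mu m (FB_eta sx sy)
              (FB_rho mu p q) s).
Proof.
  destruct (Pm_limits m Hm) as [L1 [L0 [HL1 [HL0 HGp]]]].
  set (Gm := L1 - L0).
  assert (Hp : 0 <= FB_p2 mu p) by (apply sumR_nonneg; intros; apply pow2_ge_0).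
  assert (N0 : PLpos (nakagami_pdf m Gm) 1).
  { eapply PLpos_eq. 2: eapply PLpos_ext. 3: apply (naka_mgf m Gm L1 L0 0); auto; lra.
    - replace (1 - / m * 0) with 1 by ring. unfold Rpower. rewrite ln_1, Rmult_0_r. apply exp_0.
    - intros x _. cbv beta. replace (0 * x ^ 2) with 0 by ring. rewrite exp_0. ring. }
  assert (N2 := naka_m2 m Gm L1 L0 Hm HL1 HL0 eq_refl HGp).
  exists Gm. split.
  { unfold is_Gamma. apply PLpos_imp. exists (Pm m), L1, L0.
    refine (conj _ (conj HL1 (conj HL0 eq_refl))). apply Pm_prim. }
  set (P := FB_p2 mu p) in *. set (Q := FB_p2 mu q) in *.
  set (EW := INR mu * (sx ^ 2 + sy ^ 2) + (P + Q)).
  exists EW. split.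
  - exists (fun x => 0 + sumR (2 * mu) (fun j => sig mu sx sy j ^ 2 + (aco mu p q j * x) ^ 2)). split.
    + intros x Hx. cbv beta.
      apply (IterInt_ext (2 * mu) (FB_weights mu sx sy) (fun v => 0 + sumR (2 * mu) (fun j => (fun j y => (y + aco mu p q j * x) ^ 2) j (v j))) (FB_W mu p q x)).
      { intros v. rewrite W_eq. ring. }
      apply (iter_sum (2 * mu) (FB_weights mu sx sy) (fun j y => (y + aco mu p q j * x) ^ 2) (fun j => sig mu sx sy j ^ 2 + (aco mu p q j * x) ^ 2)). intros j _. rewrite weights_eq. split.
      * apply PL_g0. apply sig_pos; auto.
      * apply PL_g2. apply sig_pos; auto.
    + apply PLpos_imp.
      pose proof (PLpos_plus _ _ _ _ (PLpos_scal _ _ (INR mu * (sx ^ 2 + sy ^ 2)) N0) (PLpos_scal _ _ (P + Q) N2)) as HH.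
      eapply PLpos_eq. 2: eapply PLpos_ext. 3: exact HH.
      * unfold EW. ring.
      * intros x _. rewrite mean_sum. fold P Q. ring.
  - set (t := s * gbar / EW).
    assert (HEW : 0 < EW). { unfold EW. assert (0 < INR mu) by (apply lt_0_INR; auto).
      assert (0 < INR mu * (sx ^ 2 + sy ^ 2)) by (apply Rmult_lt_0_compat; [auto|nra]). lra. }
    assert (Ht : t <= 0). { unfold t, Rdiv. assert (0 < / EW) by (apply Rinv_0_lt_compat; auto). assert (s * gbar <= 0) by nra. nra. }
    set (Dx := 1 - 2 * t * sx ^ 2). set (Dy := 1 - 2 * t * sy ^ 2).
    assert (HDx : 0 < Dx) by (unfold Dx; nra).
    assert (HDy : 0 < Dy) by (unfold Dy; nra).
    set (c := t / Dx * P + t / Dy * Q).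
    set (E0 := INR mu * (- / 2 * ln Dx) + INR mu * (- / 2 * ln Dy)).
    assert (Hc : c <= 0).
    { unfold c, Rdiv. assert (0 < / Dx) by (apply Rinv_0_lt_compat; auto).
      assert (0 < / Dy) by (apply Rinv_0_lt_compat; auto).
      assert (t * / Dx <= 0) by nra. assert (t * / Dy <= 0) by nra. nra. }
    exists (fun x => 1 * exp (sumR (2 * mu) (fun j => gexpo (sig mu sx sy j) t (aco mu p q j * x)))). split.
    + intros x Hx. cbv beta.
      apply (IterInt_ext (2 * mu) (FB_weights mu sx sy) (fun v => 1 * exp (sumR (2 * mu) (fun j => (fun j y => t * (y + aco mu p q j * x) ^ 2) j (v j)))) (fun v => exp (s * (gbar * FB_W mu p q x v / EW)))).
      { intros v. rewrite W_eq. cbv beta. rewrite sumR_scal. rewrite Rmult_1_l. f_equal. unfold t. field. lra. }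
      apply (iter_exp (2 * mu) (FB_weights mu sx sy) (fun j y => t * (y + aco mu p q j * x) ^ 2) (fun j => gexpo (sig mu sx sy j) t (aco mu p q j * x))). intros j _. rewrite weights_eq. apply PL_gmgf; auto. apply sig_pos; auto.
    + apply PLpos_imp.
      pose proof (PLpos_scal _ _ (exp E0) (naka_mgf m Gm L1 L0 c Hm HL1 HL0 eq_refl HGp Hc)) as HH.
      eapply PLpos_eq. 2: eapply PLpos_ext. 3: exact HH.
      * unfold FB_kappa, FB_eta, FB_rho. fold P Q.
        apply final_eq; auto.
      * intros x _. rewrite mgf_sum. fold P Q Dx Dy. fold c E0. rewrite Rmult_1_l, exp_plus. ring.
Qed.
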